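(* Fix a full-support skill distribution $p\in\Delta(\Theta)$ and two full-support perceptions $q,q'\in\Delta(\Theta)$. (a) If $q'\succsim_{LR} q$, then for every signal structure $\langle S,\pi\rangle$ and every monotone firm $A\subset\mathcal{A}_M$, $$W_A(p,q',\langle S,\pi\rangle)\ \ge\ W_A(p,q,\langle S,\pi\rangle).$$ (b) If $q'\not\succsim_{LR} q$, then there exists a signal structure $\langle S,\pi\rangle$ such that for every monotone firm $A\subset\mathcal{A}_M$, $$W_A(p,q',\langle S,\pi\rangle)\ <\ W_A(p,q,\langle S,\pi\rangle).$$
   Context: Let $\Theta\subset\mathbb{R}$ be a finite set of skill types with $|\Theta|\ge 2$. A task is a vector $a\in\mathcal{A}:=\mathbb{R}^\Theta$. A firm is a non-empty finite set $A\subset\mathcal{A}$. The firm is monotone if $A\subset\mathcal{A}_M:=\{a\in\mathbb{R}^\Theta: a(\theta')>a(\theta)\text{ whenever }\theta'>\theta\}$. A signal structure $\langle S,\pi\rangle$ consists of a non-empty finite set $S$ and a map $\pi:S\times\Theta\to[0,1]$ with $\sum_{s\in S}\pi(s|\theta)=1$ for each $\theta$, such that every $s\in S$ has $\pi(s|\theta)>0$ for some $\theta$. The true skill distribution $p$ and the perception $q$ are full-support elements of $\Delta(\Theta)$. The posterior is $q_{\langle S,\pi\rangle}(\theta|s):=q(\theta)\pi(s|\theta)/\sum_{\theta'}q(\theta')\pi(s|\theta')$. Pay of a worker with signal $s$ is $w_A(s,q,\langle S,\pi\rangle):=\max_{a\in A}\sum_{\theta}q_{\langle S,\pi\rangle}(\theta|s)a(\theta)$.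 Average pay is $W_A(p,q,\langle S,\pi\rangle):=\sum_{\theta}p(\theta)\sum_{s\in S}\pi(s|\theta)w_A(s,q,\langle S,\pi\rangle)$. Likelihood-ratio order: $q'\succsim_{LR}q$ means $q(\theta)q'(\theta')\ge q(\theta')q'(\theta)$ whenever $\theta'>\theta$. *)

(* Defs.v *)
From mathcomp Require Import all_boot all_order all_algebra.
From mathcomp Require Import reals.
From Stdlib Require List.
Set Implicit Arguments. Unset Strict Implicit. Unset Printing Implicit Defensive.
Import Order.TTheory GRing.Theory Num.Theory.
Local Open Scope ring_scope.

(* Skill types: a finite type T together with an injective embedding
   th : T -> R; the order on skill types is the order of their real values. *)

Section Defs.
Variables (R : realType) (T : finType) (th : T -> R).

Definition full_support_dist (p : T -> R) : Prop :=
  (forall t, 0 < p t) /\ \sum_(t : T) p t = 1.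

Definition signal_structure (S : finType) (pi : S -> T -> R) : Prop :=
  [/\ forall s t, 0 <= pi s t,
      forall t, \sum_(s : S) pi s t = 1
    & forall s, exists t, 0 < pi s t].

(* monotone task / firm (a firm is a non-empty finite set of tasks,
   represented by a non-empty list of tasks) *)
Definition monotone_task (a : T -> R) : Prop :=
  forall t t', th t < th t' -> a t < a t'.

Definition monotone_firm (A : seq (T -> R)) : Prop :=
  A <> [::] /\ forall a, List.In a A -> monotone_task a.

Definition LR_ge (q' q : T -> R) : Prop :=
  forall t t', th t < th t' -> q t * q' t' >= q t' * q' t.

Variables (S : finType) (pi : S -> T -> R).

Definition posterior (q : T -> R) (s : S) (t : T) : R :=
  q t * pi s t / \sum_(t' : T) q t' * pi s t'.

Definition expected_value (q : T -> R) (s : S) (a : T -> R) : R :=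
  \sum_(t : T) posterior q s t * a t.

Definition pay (A : seq (T -> R)) (q : T -> R) (s : S) : R :=
  match A with
  | [::] => 0
  | a0 :: A' => \big[Num.max/expected_value q s a0]_(a <- A') expected_value q s a
  end.

Definition avg_pay (A : seq (T -> R)) (p q : T -> R) : R :=
  \sum_(t : T) p t * \sum_(s : S) pi s t * pay A q s.

End Defs.

(* Main.v *)
Require Import Defs.
From mathcomp Require Import all_boot all_order all_algebra.
From mathcomp Require Import reals.
From mathcomp Require Import ring lra.
From Stdlib Require Import Classical.
Import Order.TTheory GRing.Theory Num.Theory.
Local Open Scope ring_scope.

Lemma ev_eq (R : realType) (T S : finType) (pi : S -> T -> R) q s a :
  expected_value pi q s a = (\sum_u q u * a u * pi s u) / (\sum_u q u * pi s u).
Proof.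
rewrite /expected_value /posterior mulr_suml; apply: eq_bigr => u _; ring.
Qed.

Lemma bigmax_le (R : realType) (X : Type) (l : seq X) (F G : X -> R) x y :
  x <= y -> (forall a, List.In a l -> F a <= G a) ->
  \big[Num.max/x]_(a <- l) F a <= \big[Num.max/y]_(a <- l) G a.
Proof.
elim: l => [|b l IH] hxy hFG; first by rewrite !big_nil.
rewrite !big_cons ge_max !le_max (hFG b (or_introl erefl)) /=.
by rewrite IH ?orbT // => a ha; apply: hFG; right.
Qed.

Lemma bigmax_lt (R : realType) (X : Type) (l : seq X) (F G : X -> R) x y :
  x < y -> (forall a, List.In a l -> F a < G a) ->
  \big[Num.max/x]_(a <- l) F a < \big[Num.max/y]_(a <- l) G a.
Proof.
elim: l => [|b l IH] hxy hFG; first by rewrite !big_nil.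
rewrite !big_cons gt_max !lt_max (hFG b (or_introl erefl)) /=.
by rewrite IH ?orbT // => a ha; apply: hFG; right.
Qed.

Lemma pay_le (R : realType) (T S : finType) (pi : S -> T -> R) A q q' s :
  (forall a, List.In a A -> expected_value pi q s a <= expected_value pi q' s a) ->
  pay pi A q s <= pay pi A q' s.
Proof.
case: A => [|a0 A] h //=.
apply: bigmax_le; first by apply: h; left.
by move=> a ha; apply: h; right.
Qed.

Lemma pay_lt (R : realType) (T S : finType) (pi : S -> T -> R) A q q' s :
  A <> [::] ->
  (forall a, List.In a A -> expected_value pi q s a < expected_value pi q' s a) ->
  pay pi A q s < pay pi A q' s.
Proof.
case: A => [|a0 A] // _ h /=.
apply: bigmax_lt; first by apply: h; left.
by move=> a ha; apply: h; right.
Qed.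

Lemma frac_le (R : realType) (x y N M : R) : 0 < N -> 0 < M ->
  x * M <= y * N -> x / N <= y / M.
Proof. by move=> hN hM h; rewrite ler_pdivrMr // mulrAC ler_pdivlMr. Qed.

Lemma frac_lt (R : realType) (x y N M : R) : 0 < N -> 0 < M ->
  x * M < y * N -> x / N < y / M.
Proof. by move=> hN hM h; rewrite ltr_pdivrMr // mulrAC ltr_pdivlMr. Qed.

Lemma den_gt0 (R : realType) (T S : finType) (pi : S -> T -> R) (q : T -> R)
  (hq : forall t, 0 < q t) (hpi : signal_structure pi) s :
  0 < \sum_u q u * pi s u.
Proof.
case: hpi => h0 _ h3; case: (h3 s) => t ht.
rewrite (bigD1 t) //=.
have h1 : 0 < q t * pi s t by apply: mulr_gt0.
have h2 : 0 <= \sum_(u | u != t) q u * pi s u.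
  by apply: sumr_ge0 => u _; apply: mulr_ge0; [apply: ltW|].
lra.
Qed.

Lemma ev_le (R : realType) (T S : finType) (th : T -> R) (th_inj : injective th)
  (pi : S -> T -> R) (q q' : T -> R)
  (hq : forall t, 0 < q t) (hq' : forall t, 0 < q' t) (hpi : signal_structure pi)
  (hLR : LR_ge th q' q) s a (ha : monotone_task th a) :
  expected_value pi q s a <= expected_value pi q' s a.
Proof.
have hpi0 : forall s t, 0 <= pi s t by case: hpi.
rewrite !ev_eq; apply: frac_le; try exact: den_gt0.
pose c t u := q' t * pi s t * (q u * pi s u) - q t * pi s t * (q' u * pi s u).
pose D := \sum_t \sum_u c t u * a t.
have eD : (\sum_u q' u * a u * pi s u) * (\sum_u q u * pi s u) -
     (\sum_u q u * a u * pi s u) * (\sum_u q' u * pi s u) = D.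
  rewrite /D !mulr_suml -sumrB; apply: eq_bigr => t _.
  rewrite !mulr_sumr -sumrB; apply: eq_bigr => u _; rewrite /c; ring.
have eD2 : D = \sum_t \sum_u - (c t u * a u).
  rewrite /D exchange_big /=; apply: eq_bigr => t _; apply: eq_bigr => u _.
  rewrite /c; ring.
have hD : 0 <= D + D.
  rewrite {1}eD2 -big_split; apply: sumr_ge0 => t _ /=.
  rewrite -big_split; apply: sumr_ge0 => u _ /=.
  have hpp : 0 <= pi s t * pi s u by apply: mulr_ge0.
  have ec : c t u = pi s t * pi s u * (q' t * q u - q t * q' u) by rewrite /c; ring.
  case: (ltgtP (th t) (th u)) => htu.
  - have := hLR _ _ htu; have := ha _ _ htu => hat hl.
    have hd : q' t * q u - q t * q' u <= 0 by lra.
    have hc : c t u <= 0 by rewrite ec; apply: mulr_ge0_le0.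
    nra.
  - have := hLR _ _ htu; have := ha _ _ htu => hat hl.
    have hd : 0 <= q' t * q u - q t * q' u by lra.
    have hc : 0 <= c t u by rewrite ec; apply: mulr_ge0.
    nra.
  - by rewrite (th_inj _ _ htu); lra.
lra.
Qed.
Theorem lemma1 (R : realType) (T : finType) (th : T -> R)
  (th_inj : injective th) (cardT : (2 <= #|T|)%N)
  (p q q' : T -> R)
  (hp : full_support_dist p) (hq : full_support_dist q)
  (hq' : full_support_dist q') :
  (LR_ge th q' q ->
     forall (S : finType) (pi : S -> T -> R), signal_structure pi ->
     forall A : seq (T -> R), monotone_firm th A ->
       avg_pay pi A p q' >= avg_pay pi A p q)
  /\
  (~ LR_ge th q' q ->
     exists (S : finType) (pi : S -> T -> R), signal_structure pi /\
     forall A : seq (T -> R), monotone_firm th A ->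
       avg_pay pi A p q' < avg_pay pi A p q).
Proof.
case: hp => hp _; case: hq => hq _; case: hq' => hq' _.
split.
  move=> hLR S pi hpi A [_ hA].
  have hpi0 : forall s t, 0 <= pi s t by case: hpi.
  rewrite /avg_pay; apply: ler_sum => t _; apply: ler_wpM2l; first exact: ltW.
  apply: ler_sum => s _; apply: ler_wpM2l => //.
  apply: pay_le => a ha; exact: ev_le (hA a ha).
move=> hnot.
have [t [t' [htt hlt]]] : exists t t', th t < th t' /\ q t * q' t' < q t' * q' t.
  apply: NNPP => hn; apply: hnot => t t' htt; rewrite leNgt; apply/negP => hl.
  by apply: hn; exists t, t'.
have ntt : t != t' by apply/eqP => e; move: htt; rewrite e ltxx.
pose inP x := (x == t) || (x == t').
pose pi := fun s u : T => if inP u then (if inP s then 2^-1 else 0)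
                          else (if s == u then 1 else 0 : R).
have htP : inP t by rewrite /inP eqxx.
have ht'P : inP t' by rewrite /inP eqxx orbT.
have pin : forall s u, inP s -> inP u -> pi s u = 2^-1.
  by move=> s u hs hu; rewrite /pi hs hu.
have H3 : forall s, inP s -> forall G : T -> R, \sum_u G u * pi s u = (G t + G t') / 2.
  move=> s hs G; rewrite (bigD1 t) //= (bigD1 t') /=; last by rewrite eq_sym ntt.
  rewrite big1 => [|i /andP [hi1 hi2]].
    by rewrite !pin //; lra.
  rewrite /pi /inP (negbTE hi1) (negbTE hi2) /=.
  case: eqP => [e|]; last by rewrite mulr0.
  by move: hs; rewrite /inP e (negbTE hi1) (negbTE hi2).
have H4 : forall s, ~~ inP s -> forall G : T -> R, \sum_u G u * pi s u = G s.
  move=> s hs G; rewrite (bigD1 s) //= big1 => [|i hi].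
    by rewrite /pi (negbTE hs) eqxx; lra.
  rewrite /pi; case: ifP => hiP; first by rewrite (negbTE hs) mulr0.
  by rewrite eq_sym (negbTE hi) mulr0.
have hpi : signal_structure pi.
  split.
  - move=> s u; rewrite /pi; case: ifP => _; case: ifP => _; lra.
  - move=> u; case hu: (inP u).
      rewrite (bigD1 t) //= (bigD1 t') /=; last by rewrite eq_sym ntt.
      rewrite big1 => [|i /andP [hi1 hi2]].
        by rewrite /pi hu /inP !eqxx orbT /=; lra.
      by rewrite /pi hu /inP (negbTE hi1) (negbTE hi2).
    rewrite (bigD1 u) //= big1 => [|i hi].
      by rewrite /pi hu eqxx; lra.
    by rewrite /pi hu (negbTE hi).
  - move=> s; case hs: (inP s).
      by exists t; rewrite /pi hs /inP eqxx /=; lra.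
    by exists s; rewrite /pi hs eqxx; lra.
have hpi0 : forall s u, 0 <= pi s u by case: hpi.
exists T, pi; split => // A [hA0 hA].
have evlt : forall s, inP s -> forall a, monotone_task th a ->
    expected_value pi q' s a < expected_value pi q s a.
  move=> s hs a ha; rewrite !ev_eq !(H3 s hs).
  have h1 := ha _ _ htt.
  have hqt := hq t; have hqt' := hq t'; have hq't := hq' t; have hq't' := hq' t'.
  apply: frac_lt; try lra.
  have hprod : 0 < (a t' - a t) * (q t' * q' t - q t * q' t').
    by apply: mulr_gt0; lra.
  nra.
have eveq : forall s, ~~ inP s -> forall qq : T -> R, (forall u, 0 < qq u) ->
    forall a, expected_value pi qq s a = a s.
  move=> s hs qq hqq a; rewrite ev_eq !(H4 s hs) [qq s * _]mulrC mulfK //.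
  by apply: lt0r_neq0.
have hle : forall s, pay pi A q' s <= pay pi A q s.
  move=> s; apply: pay_le => a ha; case hs: (inP s).
    by apply: ltW; apply: evlt => //; apply: hA.
  by rewrite !eveq ?hs.
have hlt2 : forall s, inP s -> pay pi A q' s < pay pi A q s.
  move=> s hs; apply: pay_lt => // a ha; apply: evlt => //; exact: hA.
rewrite /avg_pay (bigD1 t) //= [X in _ < X](bigD1 t) //=.
apply: ltr_leD.
  rewrite ltr_pM2l // (bigD1 t) //= [X in _ < X](bigD1 t) //=.
  apply: ltr_leD.
    rewrite ltr_pM2l; first exact: hlt2.
    by rewrite /pi htP; lra.
  by apply: ler_sum => s _; apply: ler_wpM2l.
apply: ler_sum => u _; apply: ler_wpM2l; first exact: ltW.
by apply: ler_sum => s _; apply: ler_wpM2l.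
Qed.
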